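(* Let $q=q_1q_2\cdots q_k$ be a permutation of $\{1,\dots,k\}$ with $q_1<q_k$. Let $p=p_1\cdots p_n$ be a permutation that very tightly contains $q$ at two different starting positions $i$ and $i+j$ with $1\le j$, i.e. both $p_{i+1}\cdots p_{i+k}$ and $p_{i+j+1}\cdots p_{i+j+k}$ are very tight copies of $q$. Then these two copies occupy disjoint sets of positions (i.e. $j\ge k$) unless there exists a positive integer $s\le k-1$ such that (1) the rightmost $s$ entries $q_{k-s+1},\dots,q_k$ of $q$ are the $s$ largest entries of $q$, and the leftmost $s$ entries $q_1,\dots,q_s$ of $q$ are the $s$ smallest entries of $q$; and (2) the sequence $q_1\cdots q_s$ and the sequence $q_{k-s+1}\cdots q_k$ are order-isomorphic (form the same pattern).
   Context: For a permutation $p=p_1\cdots p_n$ and a permutation $q=q_1\cdots q_k$ with $k<n$, a very tight copy of $q$ in $p$ starting at position $i$ (with $0\le i\le n-k$) means: for all $1\le j,r\le k$, $q_j<q_r$ if and only if $p_{i+j}<p_{i+r}$, and moreover $\{p_{i+1},\dots,p_{i+k}\}=\{a+1,\dots,a+k\}$ for some integer $0\le a\le n-k$ (the entries are in consecutive positions and form an interval of integers). Two sequences are order-isomorphic if their entries compare in the same way position by position. *)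

(* Defs.v *)
From mathcomp Require Import all_boot fingroup perm.
Set Implicit Arguments. Unset Strict Implicit. Unset Printing Implicit Defensive.
Local Open Scope nat_scope.

(* Permutations of {1..n} are modelled as p : 'S_n, i.e. bijections of 'I_n = {0..n-1};
   entry p_{x+1} of the paper is (p x) (positions and values shifted down by one). *)

(* value of p at a position given as a natural number (0 outside the range) *)
Definition pat {n} (p : 'S_n) (x : nat) : nat :=
  match insub x with Some y => nat_of_ord (p y) | None => 0 end.

(* very tight copy of q in p starting at position i (paper's i, 0 <= i <= n-k):
   entries p_{i+1..i+k} (here pat p (i+j), j < k) are order-isomorphic to q and
   form an interval of integers {a+1..a+k} (here {a..a+k-1}) with 0 <= a <= n-k. *)
Definition very_tight_at {n k} (p : 'S_n) (q : 'S_k) (i : nat) : Prop :=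
  i <= n - k /\
  (forall j r : 'I_k, (q j < q r) <-> (pat p (i + j) < pat p (i + r))) /\
  exists a, a <= n - k /\
    forall v, (exists j : 'I_k, pat p (i + j) = v) <-> a <= v < a + k.

Definition ends_extreme {k} (q : 'S_k) (s : nat) : Prop :=
  (forall x, k - s <= x < k -> forall y, y < k - s -> pat q y < pat q x) /\
  (forall x, x < s -> forall y, s <= y < k -> pat q x < pat q y).

Definition ends_same_pattern {k} (q : 'S_k) (s : nat) : Prop :=
  forall a b, a < s -> b < s ->
    (pat q a < pat q b) <-> (pat q (k - s + a) < pat q (k - s + b)).

(* Main.v *)
Require Import Defs.
From mathcomp Require Import all_boot fingroup perm.
From Stdlib Require Import Lia.
From mathcomp Require Import zify.


Lemma patE {m} (p : 'S_m) {x} (h : x < m) : pat p x = p (Ordinal h).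
Proof. by rewrite /pat insubT. Qed.

Lemma pat_inj {m} (p : 'S_m) x y : x < m -> y < m -> pat p x = pat p y -> x = y.
Proof.
move=> hx hy; rewrite (patE p hx) (patE p hy) => /val_inj/perm_inj.
by move/(congr1 val).
Qed.

Lemma vt_facts {n k} (p : 'S_n) (q : 'S_k) i : k < n -> very_tight_at p q i ->
  i + k < n.+1 /\
  (forall x y, x < k -> y < k -> (pat q x < pat q y <-> pat p (i + x) < pat p (i + y))) /\
  exists a, (forall t, t < k -> a <= pat p (i + t) < a + k) /\
   (forall v, a <= v < a + k -> exists u, u < k /\ pat p (i + u) = v).
Proof.
move=> hkn [hi [iso [a [_ ha]]]]; split; first lia.
split.
  move=> x y hx hy; rewrite (patE q hx) (patE q hy).
  exact: (iso (Ordinal hx) (Ordinal hy)).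
exists a; split.
  move=> t ht; apply/(ha (pat p (i + t))).1; by exists (Ordinal ht).
move=> v hv; have [u hu] := (ha v).2 hv; by exists u; split.
Qed.

Theorem proposition4p2 (k n : nat) (q : 'S_k) (p : 'S_n) (i j : nat) :
  pat q 0 < pat q k.-1 ->
  k < n ->
  1 <= j ->
  very_tight_at p q i ->
  very_tight_at p q (i + j) ->
  k <= j \/
  exists s, 0 < s <= k - 1 /\ ends_extreme q s /\ ends_same_pattern q s.
Proof.
move=> hq hkn hj V1 V2.
have [hi1 [iso1 [a [memA1 memA2]]]] := vt_facts _ _ _ hkn V1.
have [hi2 [iso2 [b [memB1 memB2]]]] := vt_facts _ _ _ hkn V2.
have hk2 : 1 < k.
  case: k q hq {iso1 iso2 memA1 memA2 memB1 memB2 hi1 hi2 V1 V2 hkn} => [|[|k]] q //=;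
  by rewrite ltnn.
case: (leqP k j) => hjk; [by left | right].
have notB : forall y, y < j -> ~ (b <= pat p (i + y) < b + k).
  move=> y hy /memB2 [u [hu e]].
  have := pat_inj p (i + j + u) (i+y) ltac:(lia) ltac:(lia) e; lia.
have notA : forall y, k - j <= y < k -> ~ (a <= pat p (i + j + y) < a + k).
  move=> y hy /memA2 [t [ht e]].
  have := pat_inj p (i + t) (i+j+y) ltac:(lia) ltac:(lia) e; lia.
have fg : forall t, pat p (i + (j + t)) = pat p (i + j + t) by move=> t; rewrite addnA.
case: (leqP b a) => hab.
  exfalso.
  have h0 := memA1 0 ltac:(lia).
  have h0' := notB 0 ltac:(lia).
  have hk1 := memB1 (k - 1 - j) ltac:(lia).
  have e : i + j + (k - 1 - j) = i + (k - 1) by lia.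
  rewrite e in hk1.
  have : pat p (i + (k - 1)) < pat p (i + 0) by lia.
  move/(iso1 (k-1) 0 ltac:(lia) ltac:(lia)).
  have e1 : k.-1 = k - 1 by lia. rewrite e1 in hq.
  lia.
exists (k - j); split; first lia.
have kj : k - (k - j) = j by lia.
split; [split|].
- move=> x hx y hy; rewrite kj in hx hy.
  apply/(iso1 y x ltac:(lia) ltac:(lia)).
  have hfx := memB1 (x - j) ltac:(lia).
  have e : i + j + (x - j) = i + x by lia.
  rewrite e in hfx.
  have := memA1 y ltac:(lia); have := notB y hy; lia.
- move=> x hx y hy.
  apply/(iso2 x y ltac:(lia) ltac:(lia)).
  have hgx := memA1 (j + x) ltac:(lia); rewrite fg in hgx.
  have := memB1 y ltac:(lia); have := notA y ltac:(lia); lia.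
- move=> x y hx hy; rewrite kj.
  rewrite (iso2 x y ltac:(lia) ltac:(lia)) (iso1 (j+x) (j+y) ltac:(lia) ltac:(lia)) !fg.
  done.
Qed.
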